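(* Let $m\ge1$ and $n\ge1$ be integers. For $0\le s\le m-1$ define $$G_{m,s}(q)=\frac{\prod_{j=0}^{s}(1+q^{m-j})}{(1-q)^{2s}}\sum_{k=0}^{s}\frac{(-1)^{s-k}}{1+q^{m-k}}\binom{2m}{k}\sum_{i=0}^{s-k}\frac{m-k}{m-s}\binom{m-s+i-1}{i}\binom{m-k-i-1}{s-k-i}q^{s-k-i}.$$ Then each $G_{m,s}(q)$ is a polynomial in $\mathbb{Z}[q]$, and $$T_{2m,n}(q)=\sum_{k=0}^{m-1}(-1)^kG_{m,k}(q)\frac{(1-q^n)^{m-k}(1-q^{n+1})^{m-k}q^{kn}}{(1-q)^{2m-2k}\prod_{i=0}^{k}(1+q^{m-i})}.$$
   Context: $q$ is an indeterminate and $q^{1/2}$ a fixed formal square root of $q$; identities are identities of rational functions in $q^{1/2}$. For integers $m,n\ge1$, $$T_{m,n}(q)=\sum_{k=1}^{n}(-1)^{n-k}\left(\frac{1-q^k}{1-q}\right)^{m}q^{\frac m2(n-k)}.$$ Binomial coefficients $\binom{a}{b}$ with integers $a,b$ are taken to be $0$ when $b<0$ or when $0\le a<b$. *)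

(* Defs.v *)
From HB Require Import structures.
From mathcomp Require Import all_boot all_order all_algebra fraction.
Set Implicit Arguments. Unset Strict Implicit. Unset Printing Implicit Defensive.
Import Order.TTheory GRing.Theory Num.Theory.
Local Open Scope ring_scope.

(* The field of rational functions Q(q^{1/2}) is realised as the fraction
   field of Z[t], with t = q^{1/2} an indeterminate and q := t^2. *)
Definition K : Type := {fraction {poly int}}.
Definition t : K := @FracField.tofrac _ ('X : {poly int}).
Definition q : K := t ^+ 2.

(* T_{m,n}(q) = sum_{k=1}^n (-1)^{n-k} ((1-q^k)/(1-q))^m q^{m/2 (n-k)},
   with q^{m/2 (n-k)} = t^{m (n-k)}. *)
Definition Tmn (m n : nat) : K :=
  \sum_(1 <= k < n.+1)
     (-1) ^+ (n - k) * ((1 - q ^+ k) / (1 - q)) ^+ m * t ^+ (m * (n - k)).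

(* G_{m,s}(q), for 0 <= s <= m-1 (all nat subtractions below are then exact). *)
Definition Gms (m s : nat) : K :=
  (\prod_(0 <= j < s.+1) (1 + q ^+ (m - j))) / (1 - q) ^+ (2 * s) *
  \sum_(0 <= k < s.+1)
     ((-1) ^+ (s - k) / (1 + q ^+ (m - k)) * ('C(2 * m, k))%:R *
      \sum_(0 <= i < (s - k).+1)
         ((m - k)%:R / (m - s)%:R * ('C(m - s + i - 1, i))%:R *
          ('C(m - k - i - 1, s - k - i))%:R * q ^+ (s - k - i))).

Definition evalq (p : {poly int}) : K := (map_poly (fun c : int => c%:~R) p).[q].

(* Main.v *)
Require Import Defs.
From HB Require Import structures.
From mathcomp Require Import all_boot all_order all_algebra fraction.
From mathcomp Require Import ring zify.
Import Order.TTheory GRing.Theory Num.Theory.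
Set Implicit Arguments. Unset Strict Implicit. Unset Printing Implicit Defensive.
Local Open Scope ring_scope.

Definition sh (F : fieldType) (f : nat -> F) : nat -> F :=
  fun n => if n is n'.+1 then f n' else 0.
Definition conv (F : fieldType) (f g : nat -> F) (n : nat) : F :=
  \sum_(i < n.+1) f i * g (n - i)%N.

Lemma sh_ext (F : fieldType) (f g : nat -> F) : f =1 g -> sh f =1 sh g.
Proof. by move=> h [|n] //=. Qed.

Lemma conv_ext (F : fieldType) (f f' g g' : nat -> F) n :
  f =1 f' -> g =1 g' -> conv f g n = conv f' g' n.
Proof. by move=> h1 h2; apply: eq_bigr => i _; rewrite h1 h2. Qed.

Lemma convC (F : fieldType) (f g : nat -> F) n : conv f g n = conv g f n.
Proof.
rewrite /conv (reindex_inj rev_ord_inj) /=; apply: eq_bigr => i _.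
rewrite subSS subKn; first by rewrite mulrC.
by rewrite -ltnS.
Qed.

Lemma conv_shl (F : fieldType) (f g : nat -> F) n : conv (sh f) g n = sh (conv f g) n.
Proof.
case: n => [|n]; first by rewrite /conv big_ord1 /= mul0r.
by rewrite /conv big_ord_recl /= mul0r add0r; apply: eq_bigr => i _; rewrite subSS.
Qed.

Lemma conv_shr (F : fieldType) (f g : nat -> F) n : conv f (sh g) n = sh (conv f g) n.
Proof. by rewrite convC conv_shl; apply: sh_ext => k; rewrite convC. Qed.

Lemma convBl (F : fieldType) (f g h : nat -> F) n :
  conv (fun i => f i - g i) h n = conv f h n - conv g h n.
Proof. by rewrite /conv -sumrB; apply: eq_bigr => i _; rewrite mulrBl. Qed.

Lemma convZl (F : fieldType) (c : F) (f h : nat -> F) n :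
  conv (fun i => c * f i) h n = c * conv f h n.
Proof. by rewrite /conv mulr_sumr; apply: eq_bigr => i _; rewrite mulrA. Qed.

Lemma convBr (F : fieldType) (f g h : nat -> F) n :
  conv h (fun i => f i - g i) n = conv h f n - conv h g n.
Proof. by rewrite convC convBl !(convC h). Qed.

Lemma convZr (F : fieldType) (c : F) (f h : nat -> F) n :
  conv h (fun i => c * f i) n = c * conv h f n.
Proof. by rewrite convC convZl convC. Qed.

Lemma conv_leib (F : fieldType) (f g : nat -> F) n :
  n%:R * conv f g n = conv (fun i => i%:R * f i) g n + conv f (fun i => i%:R * g i) n.
Proof.
rewrite /conv mulr_sumr -big_split; apply: eq_bigr => i _ /=.
have hi : (i <= n)%N by rewrite -ltnS.
rewrite -{1}(subnKC hi) natrD; ring.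
Qed.

Definition bb (F : fieldType) (N i : nat) : F := ('C(N + i - 1, i))%:R.
Definition bq (F : fieldType) (qq : F) (N i : nat) : F := ('C(N + i - 1, i))%:R * qq ^+ i.
Definition cc (F : fieldType) (qq : F) (N n : nat) : F := conv (@bb F N) (bq qq N) n.

Lemma bb1 (F : fieldType) N i : @bb F N i = bb F N.+1 i - sh (bb F N.+1) i.
Proof.
case: i => [|i]; rewrite /bb /= ?bin0 ?subr0 //.
have -> : (N.+1 + i.+1 - 1 = (N + i).+1)%N by lia.
have -> : (N + i.+1 - 1 = N + i)%N by lia.
have -> : (N.+1 + i - 1 = N + i)%N by lia.
by rewrite binS natrD addrK.
Qed.

Lemma bq1 (F : fieldType) (qq : F) N i : bq qq N i = bq qq N.+1 i - qq * sh (bq qq N.+1) i.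
Proof.
case: i => [|i]; rewrite /bq /= ?bin0 ?mulr0 ?subr0 //.
have -> : (N.+1 + i.+1 - 1 = (N + i).+1)%N by lia.
have -> : (N + i.+1 - 1 = N + i)%N by lia.
have -> : (N.+1 + i - 1 = N + i)%N by lia.
rewrite binS natrD exprS; ring.
Qed.

Lemma bb2 (F : fieldType) N i : i%:R * @bb F N i = N%:R * sh (bb F N.+1) i.
Proof.
case: i => [|i]; rewrite /bb /= ?mul0r ?mulr0 //.
have -> : (N + i.+1 - 1 = N + i)%N by lia.
have -> : (N.+1 + i - 1 = N + i)%N by lia.
rewrite -!natrM; congr (_%:R).
rewrite mul_bin_left addnK mulnC. done.
Qed.

Lemma bq2 (F : fieldType) (qq : F) N i : i%:R * bq qq N i = N%:R * qq * sh (bq qq N.+1) i.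
Proof.
case: i => [|i]; rewrite /bq /= ?mul0r ?mulr0 //.
have := bb2 F N i.+1; rewrite /bb /= => h.
rewrite mulrA h exprS; ring.
Qed.

Lemma cc1 (F : fieldType) (qq : F) N n :
  cc qq N n = cc qq N.+1 n - (1 + qq) * sh (cc qq N.+1) n + qq * sh (sh (cc qq N.+1)) n.
Proof.
rewrite /cc (conv_ext n (@bb1 F N) (@bq1 F qq N)).
rewrite convBl !convBr !convZr conv_shl conv_shl conv_shr.
rewrite (sh_ext (conv_shr _ _)).
case: n => [|[|n]] //=; ring.
Qed.

Lemma sh_lin (F : fieldType) (a b : F) (f g : nat -> F) n :
  sh (fun m => a * f m + b * g m) n = a * sh f n + b * sh g n.
Proof. case: n => [|n] //=; ring. Qed.

Lemma cc2 (F : fieldType) (qq : F) N n :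
  n%:R * cc qq N n = N%:R * ((1 + qq) * sh (cc qq N.+1) n - 2%:R * qq * sh (sh (cc qq N.+1)) n).
Proof.
rewrite /cc conv_leib.
rewrite (conv_ext n (@bb2 F N) (frefl _)) (conv_ext n (frefl _) (@bq2 F qq N)).
rewrite convZl convZr conv_shl conv_shr.
have e1 : conv (bb F N.+1) (bq qq N) =1
   (fun m => 1 * conv (bb F N.+1) (bq qq N.+1) m + (- qq) * sh (conv (bb F N.+1) (bq qq N.+1)) m).
  move=> m; rewrite (conv_ext m (frefl _) (@bq1 F qq N)) convBr convZr conv_shr; ring.
have e2 : conv (bb F N) (bq qq N.+1) =1
   (fun m => 1 * conv (bb F N.+1) (bq qq N.+1) m + (- 1) * sh (conv (bb F N.+1) (bq qq N.+1)) m).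
  move=> m; rewrite (conv_ext m (@bb1 F N) (frefl _)) convBl conv_shl; ring.
rewrite (sh_ext e1) (sh_ext e2) !sh_lin.
ring.
Qed.

Definition aa (F : fieldType) (qq : F) (N n : nat) : F :=
  cc qq N.+1 n - qq * sh (sh (cc qq N.+1)) n.

Lemma e_a (F : fieldType) (qq : F) N n : N%:R != 0 :> F ->
  (N + n)%:R / N%:R * cc qq N n = aa qq N n.
Proof.
move=> hN.
have h1 := cc1 qq N n; have h2 := cc2 qq N n.
have -> : (N + n)%:R / N%:R * cc qq N n = (N%:R * cc qq N n + n%:R * cc qq N n) / N%:R.
  by rewrite natrD; field.
rewrite h2 {1}h1 /aa; field; done.
Qed.

Lemma aa_rec (F : fieldType) (qq : F) N n :
  aa qq N n = aa qq N.+1 n - (1 + qq) * sh (aa qq N.+1) n + qq * sh (sh (aa qq N.+1)) n.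
Proof.
case: n => [|[|[|[|n]]]]; rewrite /aa /=; rewrite !(cc1 qq N.+1) /=; ring.
Qed.

Lemma cc_1_0 (F : fieldType) (qq : F) : cc qq 1 0 = 1.
Proof. by rewrite /cc /conv big_ord1 /bb /bq /= bin0 mulr1 mul1r. Qed.

Lemma cc_1_Sa (F : fieldType) (qq : F) n : cc qq 1 n.+1 = cc qq 1 n + qq ^+ n.+1.
Proof.
rewrite /cc /conv big_ord_recl addrC; congr (_ + _).
  apply: eq_bigr => i _; rewrite /bb /bq /= subSS.
  by rewrite !add1n !subn1 /= !binn.
by rewrite /bb /bq /= bin0 binn subn0 !mul1r.
Qed.

Lemma cc_1_Sb (F : fieldType) (qq : F) n : cc qq 1 n.+1 = qq * cc qq 1 n + 1.
Proof.
rewrite /cc /conv big_ord_recr /=; congr (_ + _).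
  rewrite mulr_sumr; apply: eq_bigr => i _; rewrite /bb /bq /=.
  have hi : (i <= n)%N by rewrite -ltnS.
  rewrite subSn // !add1n !subn1 /= !binn exprS; ring.
by rewrite /bb /bq add1n subn1 /= binn subnn bin0 !mul1r expr0.
Qed.

Lemma aa0 (F : fieldType) (qq : F) M : aa qq 0 M.+1 = 1 + qq ^+ M.+1.
Proof.
case: M => [|M].
  by rewrite /aa /= mulr0 subr0 cc_1_Sa cc_1_0 expr1.
rewrite /aa /= !cc_1_Sa.
have := cc_1_Sb qq M; rewrite cc_1_Sa => h.
have -> : qq * cc qq 1 M = cc qq 1 M + qq ^+ M.+1 - 1 by rewrite h; ring.
ring.
Qed.

Lemma aa10 (F : fieldType) (qq : F) : aa qq 1 0 = 1.
Proof. by rewrite /aa /= mulr0 subr0 /cc /conv big_ord1 /bb /bq /= bin0 mulr1 mul1r. Qed.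

Lemma sum_sh (F : fieldType) (G : nat -> nat -> F) (H : nat -> F) M :
  \sum_(N < M.+1) sh (G N) (M - N)%N * H N = \sum_(N < M) G N (M.-1 - N)%N * H N.
Proof.
rewrite big_ord_recr /= subnn mul0r addr0; apply: eq_bigr => i _.
have -> : (M - i = (M.-1 - i).+1)%N by have := ltn_ord i; lia.
by [].
Qed.

Definition Bt (F : fieldType) (qq u : F) (M : nat) : F :=
  \sum_(N < M) aa qq N.+1 (M.-1 - N)%N * (((1 - u) * (1 - qq * u)) ^+ N.+1 * u ^+ (M.-1 - N)%N).

Lemma Bt_rec (F : fieldType) (qq u : F) M :
  Bt qq u M.+2 = (1 + qq * u ^+ 2) * Bt qq u M.+1 - qq * u ^+ 2 * Bt qq u M
     + (1 - u) * (1 - qq * u) * aa qq 0 M.+1 * u ^+ M.+1.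
Proof.
set Ps := (1 - u) * (1 - qq * u).
have S1 : \sum_(N < M.+2) aa qq N (M.+1 - N)%N * (Ps ^+ N.+1 * u ^+ (M.+1 - N)%N)
   = Ps * (aa qq 0 M.+1 * u ^+ M.+1 + Bt qq u M.+1).
  rewrite big_ord_recl /Bt mulrDr mulr_sumr subn0 /=; congr (_ + _).
    rewrite expr1; ring.
  apply: eq_bigr => i _ /=; rewrite subSS exprS; ring.
have S2 : \sum_(N < M.+2) sh (aa qq N.+1) (M.+1 - N)%N * (Ps ^+ N.+1 * u ^+ (M.+1 - N)%N)
   = u * Bt qq u M.+1.
  rewrite (sum_sh (fun N => aa qq N.+1) (fun N => Ps ^+ N.+1 * u ^+ (M.+1 - N)%N)).
  rewrite /Bt mulr_sumr; apply: eq_bigr => i _ /=.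
  have -> : (M.+1 - i = (M - i).+1)%N by have := ltn_ord i; lia.
  rewrite [u ^+ (M - i).+1]exprS; ring.
have S3 : \sum_(N < M.+2) sh (sh (aa qq N.+1)) (M.+1 - N)%N * (Ps ^+ N.+1 * u ^+ (M.+1 - N)%N)
   = u ^+ 2 * Bt qq u M.
  rewrite (sum_sh (fun N => sh (aa qq N.+1)) (fun N => Ps ^+ N.+1 * u ^+ (M.+1 - N)%N)) /=.
  rewrite (sum_sh (fun N => aa qq N.+1) (fun N => Ps ^+ N.+1 * u ^+ (M.+1 - N)%N)) /Bt mulr_sumr; apply: eq_bigr => i _ /=.
  have -> : (M.+1 - i = (M.-1 - i).+2)%N by have := ltn_ord i; lia.
  rewrite !exprS; ring.
have -> : Bt qq u M.+2 = \sum_(N < M.+2) aa qq N (M.+1 - N)%N * (Ps ^+ N.+1 * u ^+ (M.+1 - N)%N)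
   + (1 + qq) * \sum_(N < M.+2) sh (aa qq N.+1) (M.+1 - N)%N * (Ps ^+ N.+1 * u ^+ (M.+1 - N)%N)
   - qq * \sum_(N < M.+2) sh (sh (aa qq N.+1)) (M.+1 - N)%N * (Ps ^+ N.+1 * u ^+ (M.+1 - N)%N).
  rewrite !mulr_sumr -big_split -sumrB /Bt /=; apply: eq_bigr => i _.
  rewrite (aa_rec qq i); ring.
rewrite S1 S2 S3; rewrite /Ps; ring.
Qed.

Lemma Bt_closed (F : fieldType) (qq u : F) M :
  Bt qq u M = (1 - u ^+ M) * (1 - (qq * u) ^+ M).
Proof.
elim: M {-2}M (leqnn M) => [|K0 IH] M hM.
  by move: hM; rewrite leqn0 => /eqP ->; rewrite /Bt big_ord0 expr0 subrr mul0r.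
case: M hM => [|[|M]] hM.
- by rewrite /Bt big_ord0 expr0 subrr mul0r.
- by rewrite /Bt big_ord1 /= aa10 expr1 expr0 !mulr1 mul1r expr1.
rewrite Bt_rec IH; last by lia.
rewrite IH; last by lia.
rewrite aa0 !exprMn !exprS; ring.
Qed.


Lemma exch (F : fieldType) m (f : nat -> nat -> F) :
  \sum_(0 <= k < m) \sum_(0 <= j < k.+1) f k j =
  \sum_(0 <= j < m) \sum_(0 <= r < m - j) f (r + j)%N j.
Proof.
transitivity (\sum_(0 <= k < m) \sum_(0 <= j < m) (if (j <= k)%N then f k j else 0)).
  apply: eq_big_nat => k /andP[_ hk].
  rewrite (big_nat_widen _ _ _ _ _ (hk : (k.+1 <= m)%N)) big_mkcond /=.
  by apply: eq_bigr => j _; rewrite ltnS.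
rewrite exchange_big_nat; apply: eq_big_nat => j /andP[_ hj].
rewrite (big_cat_nat (leq0n j) (ltnW hj)) /=.
rewrite big_nat_cond big1 ?add0r; last first.
  by move=> k /andP[/andP[_ hk] _]; rewrite leqNgt hk.
rewrite -{1}(add0n j) big_addn; apply: eq_big_nat => r _; by rewrite leq_addl.
Qed.

Lemma sgn_comb (F : fieldType) k j : (j <= k)%N -> (-1) ^+ k * (-1) ^+ (k - j) = (-1) ^+ j :> F.
Proof.
move=> h; rewrite -exprD.
have -> : (k + (k - j) = j + (k - j) * 2)%N by lia.
by rewrite exprD exprM sqrr_sign mulr1.
Qed.

Definition GmsG (F : fieldType) (qq : F) (m s : nat) : F :=
  (\prod_(0 <= j < s.+1) (1 + qq ^+ (m - j))) / (1 - qq) ^+ (2 * s) *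
  \sum_(0 <= k < s.+1)
     ((-1) ^+ (s - k) / (1 + qq ^+ (m - k)) * ('C(2 * m, k))%:R *
      \sum_(0 <= i < (s - k).+1)
         ((m - k)%:R / (m - s)%:R * ('C(m - s + i - 1, i))%:R *
          ('C(m - k - i - 1, s - k - i))%:R * qq ^+ (s - k - i))).

Lemma inner_aa (F : fieldType) (qq : F) m s k : (k <= s)%N -> (s < m)%N ->
  (m - s)%:R != 0 :> F ->
  \sum_(0 <= i < (s - k).+1)
         ((m - k)%:R / (m - s)%:R * ('C(m - s + i - 1, i))%:R *
          ('C(m - k - i - 1, s - k - i))%:R * qq ^+ (s - k - i))
  = aa qq (m - s) (s - k).
Proof.
move=> hks hsm hN.
rewrite -e_a // /cc /conv mulr_sumr big_mkord; apply: eq_bigr => i _.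
have hi : (i <= s - k)%N by rewrite -ltnS.
have -> : (m - s + (s - k) = m - k)%N by lia.
rewrite /bb /bq.
have -> : (m - s + (s - k - i) - 1 = m - k - i - 1)%N by lia.
ring.
Qed.

Definition Psi (F : fieldType) (qq u : F) := (1 - u) * (1 - qq * u).

Definition RsumG (F : fieldType) (qq : F) (m : nat) (u : F) : F :=
  \sum_(0 <= k < m)
      (-1) ^+ k * GmsG qq m k *
      ((1 - u) ^+ (m - k) * (1 - qq * u) ^+ (m - k) * u ^+ k) /
      ((1 - qq) ^+ (2 * m - 2 * k) * \prod_(0 <= i < k.+1) (1 + qq ^+ (m - i))).

Lemma RsumG_closed (F : fieldType) (qq : F) m u :
  1 - qq != 0 -> (forall a, 1 + qq ^+ a != 0) -> (forall N, (0 < N)%N -> N%:R != 0 :> F) ->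
  RsumG qq m u = ((1 - qq) ^+ (2 * m))^-1 *
    \sum_(0 <= j < m) ((-1) ^+ j * ('C(2 * m, j))%:R / (1 + qq ^+ (m - j)) *
        (u ^+ j * ((1 - u ^+ (m - j)) * (1 - (qq * u) ^+ (m - j))))).
Proof.
move=> hq hP hN.
have hY : forall a, (1 - qq) ^+ a != 0 by move=> a; rewrite expf_neq0.
have hPr : forall k, \prod_(0 <= i < k) (1 + qq ^+ (m - i)) != 0.
  by move=> k; rewrite prodf_seq_neq0; apply/allP => i _; rewrite hP.
transitivity (((1 - qq) ^+ (2 * m))^-1 * \sum_(0 <= k < m) \sum_(0 <= j < k.+1)
   ((-1) ^+ j * ('C(2 * m, j))%:R / (1 + qq ^+ (m - j)) *
     (aa qq (m - k) (k - j) * (Psi qq u ^+ (m - k) * u ^+ k)))).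
  rewrite /RsumG mulr_sumr; apply: eq_big_nat => k /andP[_ hk].
  rewrite /GmsG.
  set Pk := \prod_(0 <= j < k.+1) _.
  set S := \sum_(0 <= j < k.+1) _.
  have -> : (1 - qq) ^+ (2 * m) = (1 - qq) ^+ (2 * k) * (1 - qq) ^+ (2 * m - 2 * k).
    by rewrite -exprD; congr (_ ^+ _); lia.
  have -> : (-1) ^+ k * (Pk / (1 - qq) ^+ (2 * k) * S) *
      ((1 - u) ^+ (m - k) * (1 - qq * u) ^+ (m - k) * u ^+ k) /
      ((1 - qq) ^+ (2 * m - 2 * k) * Pk)
    = ((1 - qq) ^+ (2 * k) * (1 - qq) ^+ (2 * m - 2 * k))^-1 *
      ((-1) ^+ k * S * (Psi qq u ^+ (m - k) * u ^+ k)).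
    rewrite /Psi exprMn; field.
    by rewrite hPr !hY.
  congr (_ * _); rewrite /S mulr_sumr mulr_suml; apply: eq_big_nat => j /andP[_ hj].
  rewrite inner_aa //; last by rewrite hN //; lia.
  rewrite -(sgn_comb F (ltnSE hj)); ring.
congr (_ * _); rewrite exch; apply: eq_big_nat => j /andP[_ hj].
rewrite -mulr_sumr; congr (_ * _).
rewrite -Bt_closed /Bt mulr_sumr big_mkord.
rewrite (reindex_inj rev_ord_inj) /=; apply: eq_bigr => r _.
have hr := ltn_ord r.
have -> : (m - (m - j - r.+1 + j) = r.+1)%N by lia.
have -> : (m - j - r.+1 + j - j = (m - j).-1 - r)%N by lia.
have -> : (m - j - r.+1 + j = j + ((m - j).-1 - r))%N by lia.
rewrite /Psi exprD; ring.
Qed.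


Lemma alt_partial (F : fieldType) n k :
  \sum_(0 <= j < k.+1) (-1) ^+ j * ('C(n.+1, j))%:R = (-1) ^+ k * ('C(n, k))%:R :> F.
Proof.
elim: k => [|k IH]; first by rewrite big_nat1 !bin0 expr0.
rewrite big_nat_recr //= IH binS natrD exprS; ring.
Qed.

Lemma binom_id (F : fieldType) m (x : F) : (0 < m)%N ->
  \sum_(0 <= j < m) ((-1) ^+ j * ('C(2 * m, j))%:R * (x ^+ j * (1 - x ^+ (m - j)) ^+ 2))
  = (1 - x) ^+ (2 * m).
Proof.
move=> hm.
have -> : \sum_(0 <= j < m) ((-1) ^+ j * ('C(2 * m, j))%:R * (x ^+ j * (1 - x ^+ (m - j)) ^+ 2))
  = \sum_(0 <= j < m) ((-1) ^+ j * ('C(2 * m, j))%:R * x ^+ j)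
    + \sum_(0 <= j < m) ((-1) ^+ j * ('C(2 * m, j))%:R * x ^+ (2 * m - j))
    - 2%:R * x ^+ m * \sum_(0 <= j < m) ((-1) ^+ j * ('C(2 * m, j))%:R).
  rewrite mulr_sumr.
  transitivity (\sum_(0 <= j < m) ((-1) ^+ j * ('C(2 * m, j))%:R * x ^+ j
      + (-1) ^+ j * ('C(2 * m, j))%:R * x ^+ (2 * m - j)
      - 2%:R * x ^+ m * ((-1) ^+ j * ('C(2 * m, j))%:R))); last first.
    by rewrite sumrB big_split.
  apply: eq_big_nat => j /andP[_ hj].
  have -> : x ^+ m = x ^+ j * x ^+ (m - j) by rewrite -exprD; congr (_ ^+ _); lia.
  have -> : x ^+ (2 * m - j) = x ^+ j * x ^+ (m - j) * x ^+ (m - j)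
    by rewrite -!exprD; congr (_ ^+ _); lia.
  ring.
rewrite exprBn -(big_mkord xpredT (fun i => (-1) ^+ i * 1 ^+ (2 * m - i) * x ^+ i *+ 'C(2 * m, i))).
rewrite (big_cat_nat (leq0n m) (_ : (m <= (2 * m).+1)%N)); last by lia.
rewrite (big_cat_nat (_ : (m <= m.+1)%N) (_ : (m.+1 <= (2 * m).+1)%N)) //=; last by lia.
rewrite big_nat1.
have E1 : \sum_(0 <= i < m) (-1) ^+ i * 1 ^+ (2 * m - i) * x ^+ i *+ 'C(2 * m, i)
   = \sum_(0 <= j < m) ((-1) ^+ j * ('C(2 * m, j))%:R * x ^+ j).
  apply: eq_big_nat => i _; rewrite expr1n mulr1 -mulr_natr; ring.
have E3 : \sum_(m.+1 <= i < (2 * m).+1) (-1) ^+ i * 1 ^+ (2 * m - i) * x ^+ i *+ 'C(2 * m, i)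
   = \sum_(0 <= j < m) ((-1) ^+ j * ('C(2 * m, j))%:R * x ^+ (2 * m - j)).
  rewrite -{1}(add0n m.+1) big_addn big_nat_rev.
  have -> : ((2 * m).+1 - m.+1 = m)%N by lia.
  apply: eq_big_nat => j /andP[_ hj].
  rewrite add0n.
  have -> : (m - j.+1 + m.+1 = 2 * m - j)%N by lia.
  rewrite bin_sub; last by lia.
  have -> : (2 * m - j = j + (m - j) * 2)%N by lia.
  rewrite expr1n mulr1 -mulr_natr exprD exprM sqrr_sign mulr1.
  ring.
rewrite E1 E3.
case: m hm {E1 E3} => [//|m] _.
have -> : (2 * m.+1 = (2 * m).+1.+1)%N by lia.
rewrite (alt_partial F (2 * m).+1 m).
have -> : ('C((2 * m).+2, m.+1) = 'C((2 * m).+1, m) * 2)%N.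
  have hb : 'C((2 * m).+1, m.+1) = 'C((2 * m).+1, m).
    rewrite -[in RHS](bin_sub (_ : (m <= (2 * m).+1)%N)); last by lia.
    by congr 'C(_, _); lia.
  by rewrite binS hb muln2 addnn.
have -> : ((2 * m).+2 - m.+1 = m.+1)%N by lia.
rewrite expr1n mulr1 -[_ *+ (_ * 2)%N]mulr_natr natrM exprS.
rewrite -!addrA; congr (_ + _); rewrite addrC; congr (_ + _); rewrite exprS; ring.
Qed.

Lemma RsumG_rec (F : fieldType) (qq : F) m u :
  (0 < m)%N -> qq != 0 ->
  1 - qq != 0 -> (forall a, 1 + qq ^+ a != 0) -> (forall N, (0 < N)%N -> N%:R != 0 :> F) ->
  RsumG qq m u + qq ^+ m * RsumG qq m (u / qq) = ((1 - u) / (1 - qq)) ^+ (2 * m).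
Proof.
move=> hm hq0 hq hP hN.
rewrite !RsumG_closed // expr_div_n.
rewrite mulrCA -mulrDr mulrC; congr (_ * _).
rewrite -(binom_id u hm).
set A := fun j : nat => (-1) ^+ j * ('C(2 * m, j))%:R / (1 + qq ^+ (m - j)).
transitivity (\sum_(0 <= j < m) (A j * (u ^+ j * ((1 - u ^+ (m - j)) * (1 - (qq * u) ^+ (m - j))))
   + qq ^+ m * (A j * ((u / qq) ^+ j * ((1 - (u / qq) ^+ (m - j)) * (1 - (qq * (u / qq)) ^+ (m - j))))))).
  by rewrite big_split /= mulr_sumr.
apply: eq_big_nat => j /andP[_ hj].
have -> : qq ^+ m = qq ^+ j * qq ^+ (m - j) by rewrite -exprD; congr (_ ^+ _); lia.
have -> : qq * (u / qq) = u by field.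
rewrite /A !expr_div_n !exprMn.
have h1 := hP (m - j)%N.
have h2 : qq ^+ j != 0 by rewrite expf_neq0.
have h3 : qq ^+ (m - j) != 0 by rewrite expf_neq0.
move: (qq ^+ j) (qq ^+ (m - j)%N) (u ^+ j) (u ^+ (m - j)%N) h1 h2 h3 => a b c d h1 h2 h3.
field.
by rewrite h1 h2 h3.
Qed.


Definition cval (F : fieldType) (qq : F) (m k : nat) : F :=
  (-1) ^+ k * GmsG qq m k / \prod_(0 <= i < k.+1) (1 + qq ^+ (m - i)).

Lemma RsumG_cval (F : fieldType) (qq : F) m u :
  1 - qq != 0 -> (forall a, 1 + qq ^+ a != 0) ->
  RsumG qq m u = \sum_(0 <= k < m) (cval qq m k *
     (((1 - u) ^+ (m - k) * (1 - qq * u) ^+ (m - k) * u ^+ k) / (1 - qq) ^+ (2 * m - 2 * k))).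
Proof.
move=> hq hP; apply: eq_big_nat => k _.
have hPr : \prod_(0 <= i < k.+1) (1 + qq ^+ (m - i)) != 0.
  by rewrite prodf_seq_neq0; apply/allP => i _; rewrite hP.
have hY : (1 - qq) ^+ (2 * m - 2 * k) != 0 by rewrite expf_neq0.
rewrite /cval.
move: (\prod_(0 <= i < k.+1) (1 + qq ^+ (m - i))) hPr => P hPr.
move: ((1 - qq) ^+ (2 * m - 2 * k)) hY => Y hY.
field. by rewrite hPr hY.
Qed.

Lemma term_z (F : fieldType) (qq z : F) m k c : (k < m)%N -> qq != 0 -> 1 - qq != 0 -> z - qq != 0 ->
  let u := (z - 1) / (z - qq) in
  (z - qq) ^+ (2 * m) *
  (c * (((1 - u) ^+ (m - k) * (1 - qq * u) ^+ (m - k) * u ^+ k) / (1 - qq) ^+ (2 * m - 2 * k))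
   + qq ^+ m * (c * (((1 - u / qq) ^+ (m - k) * (1 - qq * (u / qq)) ^+ (m - k) * (u / qq) ^+ k)
        / (1 - qq) ^+ (2 * m - 2 * k))))
  = c * ((z - 1) * (z - qq)) ^+ k * (z ^+ (m - k) + (1 + qq - z) ^+ (m - k)).
Proof.
move=> hk hq0 hq hd u.
have e1 : 1 - u = (1 - qq) / (z - qq) by rewrite /u; field; rewrite ?hd ?hq0 ?hq.
have e2 : 1 - qq * u = (1 - qq) * z / (z - qq) by rewrite /u; field; rewrite ?hd ?hq0 ?hq.
have e3 : 1 - u / qq = (1 - qq) * (1 + qq - z) / (qq * (z - qq)) by rewrite /u; field; rewrite ?hd ?hq0 ?hq.
have e4 : qq * (u / qq) = u by field; rewrite ?hd ?hq0 ?hq.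
have e5 : u / qq = (z - 1) / (qq * (z - qq)) by rewrite /u; field; rewrite ?hd ?hq0 ?hq.
rewrite e4 e1 e2 e3 e5 /u.
have -> : (z - qq) ^+ (2 * m) = (z - qq) ^+ (m - k) * (z - qq) ^+ (m - k) * ((z - qq) ^+ k * (z - qq) ^+ k).
  by rewrite -!exprD; congr (_ ^+ _); lia.
have -> : (1 - qq) ^+ (2 * m - 2 * k) = (1 - qq) ^+ (m - k) * (1 - qq) ^+ (m - k).
  by rewrite -!exprD; congr (_ ^+ _); lia.
have -> : qq ^+ m = qq ^+ (m - k) * qq ^+ k.
  by rewrite -!exprD; congr (_ ^+ _); lia.
rewrite !expr_div_n !exprMn.
have h1 : (z - qq) ^+ (m - k) != 0 by rewrite expf_neq0.
have h2 : (z - qq) ^+ k != 0 by rewrite expf_neq0.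
have h3 : (1 - qq) ^+ (m - k) != 0 by rewrite expf_neq0.
have h4 : qq ^+ (m - k) != 0 by rewrite expf_neq0.
have h5 : qq ^+ k != 0 by rewrite expf_neq0.
move: ((z - qq) ^+ (m - k)%N) ((z - qq) ^+ k) ((1 - qq) ^+ (m - k)%N) (qq ^+ (m - k)%N) (qq ^+ k) h1 h2 h3 h4 h5
  => A B C D E h1 h2 h3 h4 h5.
field.
by rewrite h1 h2 h3 h4 h5.
Qed.

Lemma zid (F : fieldType) (qq z : F) m : (0 < m)%N -> qq != 0 -> 1 - qq != 0 ->
  (forall a, 1 + qq ^+ a != 0) -> (forall N, (0 < N)%N -> N%:R != 0 :> F) -> z - qq != 0 ->
  \sum_(0 <= k < m) cval qq m k * ((z - 1) * (z - qq)) ^+ k * (z ^+ (m - k) + (1 + qq - z) ^+ (m - k)) = 1.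
Proof.
move=> hm hq0 hq hP hN hd.
have := RsumG_rec ((z - 1) / (z - qq)) hm hq0 hq hP hN.
rewrite !RsumG_cval // => h.
have e : (1 - (z - 1) / (z - qq)) / (1 - qq) = (z - qq)^-1 by field; rewrite ?hd ?hq.
rewrite e in h.
transitivity ((z - qq) ^+ (2 * m) * (z - qq)^-1 ^+ (2 * m)); last first.
  by rewrite -exprMn mulfV // expr1n.
rewrite -h.
set u := (z - 1) / (z - qq).
transitivity (\sum_(0 <= k < m) (z - qq) ^+ (2 * m) *
  (cval qq m k * (((1 - u) ^+ (m - k) * (1 - qq * u) ^+ (m - k) * u ^+ k) / (1 - qq) ^+ (2 * m - 2 * k))
   + qq ^+ m * (cval qq m k * (((1 - u / qq) ^+ (m - k) * (1 - qq * (u / qq)) ^+ (m - k) * (u / qq) ^+ k)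
        / (1 - qq) ^+ (2 * m - 2 * k))))); last first.
  by rewrite -mulr_sumr big_split /= -mulr_sumr.
apply: eq_big_nat => k /andP[_ hk].
by symmetry; apply: term_z.
Qed.


Fixpoint ppair (F : fieldType) (qq : F) (r : nat) : {poly F} * {poly F} :=
  if r is r'.+1 then
    ((ppair qq r').2, (1 + qq)%:P * (ppair qq r').2 - (qq%:P - 'X) * (ppair qq r').1)
  else ((2%:R : F)%:P, (1 + qq)%:P).

Definition pp (F : fieldType) (qq : F) r := (ppair qq r).1.

Lemma ppair_eval (F : fieldType) (qq z : F) r :
  (ppair qq r).1.[(z - 1) * (z - qq)] = z ^+ r + (1 + qq - z) ^+ r /\
  (ppair qq r).2.[(z - 1) * (z - qq)] = z ^+ r.+1 + (1 + qq - z) ^+ r.+1.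
Proof.
elim: r => [|r [IH1 IH2]] /=.
  by rewrite !hornerC !expr0 !expr1; split; ring.
split => //.
rewrite hornerD hornerN !hornerM !hornerC hornerD hornerN hornerC hornerX IH1 IH2.
rewrite !exprS; ring.
Qed.

Lemma pp_coef0 (F : fieldType) (qq : F) r : (pp qq r)`_0 = 1 + qq ^+ r.
Proof.
rewrite -horner_coef0 (_ : 0 = (1 - 1) * (1 - qq)); last by rewrite subrr mul0r.
by rewrite /pp (ppair_eval qq 1 r).1 expr1n; congr (_ + _ ^+ _); ring.
Qed.

Definition Hpoly (F : fieldType) (qq : F) m : {poly F} :=
  \sum_(0 <= k < m) (cval qq m k)%:P * ('X^k * pp qq (m - k)).

Lemma H_eval (F : fieldType) (qq z : F) m : (0 < m)%N -> qq != 0 -> 1 - qq != 0 ->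
  (forall a, 1 + qq ^+ a != 0) -> (forall N, (0 < N)%N -> N%:R != 0 :> F) -> z - qq != 0 ->
  (Hpoly qq m).[(z - 1) * (z - qq)] = 1.
Proof.
move=> hm hq0 hq hP hN hd.
rewrite /Hpoly horner_sum -[RHS](zid hm hq0 hq hP hN hd); apply: eq_big_nat => k _.
by rewrite hornerM hornerC hornerM hornerXn /pp (ppair_eval qq z (m - k)).1 mulrA.
Qed.

Lemma H_one (F : fieldType) (qq : F) m : (0 < m)%N -> qq != 0 -> 1 - qq != 0 ->
  (forall a, 1 + qq ^+ a != 0) -> (forall N, (0 < N)%N -> N%:R != 0 :> F) ->
  (forall i : nat, (i%:R : F) - qq != 0) ->
  injective (fun i : nat => ((i%:R - 1) * (i%:R - qq) : F)) ->
  Hpoly qq m = 1.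
Proof.
move=> hm hq0 hq hP hN hz hinj.
apply/eqP; rewrite -subr_eq0; apply/negPn/negP => hne.
set p := Hpoly qq m - 1.
have hmp := @max_poly_roots F p [seq ((i%:R - 1) * (i%:R - qq) : F) | i <- iota 0 (size p)] hne.
rewrite size_map size_iota ltnn in hmp.
suff : false by []. apply: hmp.
  apply/allP => x /mapP[i _ ->]; rewrite /root /p hornerD hornerN hornerC H_eval //.
  by rewrite subrr.
by rewrite map_inj_uniq // iota_uniq.
Qed.

Lemma crec (F : fieldType) (qq : F) m s : Hpoly qq m = 1 -> (s < m)%N ->
  cval qq m s * (1 + qq ^+ (m - s)) =
  (s == 0)%:R - \sum_(0 <= k < s) cval qq m k * (pp qq (m - k))`_(s - k).
Proof.
move=> hH hs.
have := congr1 (fun p : {poly F} => p`_s) hH; rewrite coef1 /Hpoly coef_sum => h.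
rewrite -h.
rewrite (big_cat_nat (leq0n s) (ltnW hs)) /=.
rewrite (@big_cat_nat _ _ _ s.+1 s m) //= big_nat1.
rewrite [X in _ + (_ + X)]big_nat_cond [X in _ + (_ + X)]big1; last first.
  move=> k /andP[/andP[hk _] _]; rewrite coefCM coefXnM.
  by rewrite ltnNge (_ : (k <= s)%N = false) ?mulr0 //; apply/negbTE; rewrite -ltnNge.
rewrite coefCM coefXnM ltnn subnn pp_coef0 addr0.
have -> : \sum_(0 <= i < s) ((cval qq m i)%:P * ('X^i * pp qq (m - i)))`_s
   = \sum_(0 <= k < s) cval qq m k * (pp qq (m - k))`_(s - k).
  apply: eq_big_nat => k /andP[_ hk]; rewrite coefCM coefXnM.
  by rewrite ltnNge ltnW.
by rewrite addrC addrK.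
Qed.

Lemma G_rec (F : fieldType) (qq : F) m s : Hpoly qq m = 1 -> (s < m)%N ->
  (forall a, 1 + qq ^+ a != 0) ->
  GmsG qq m s = (-1) ^+ s * ((s == 0)%:R * \prod_(0 <= i < s) (1 + qq ^+ (m - i)) -
     \sum_(0 <= k < s) ((-1) ^+ k * GmsG qq m k) * \prod_(k.+1 <= i < s) (1 + qq ^+ (m - i))
        * (pp qq (m - k))`_(s - k)).
Proof.
move=> hH hs hP.
have hPr : forall k, \prod_(0 <= i < k) (1 + qq ^+ (m - i)) != 0.
  by move=> k; rewrite prodf_seq_neq0; apply/allP => i _; rewrite hP.
have hc : forall k, cval qq m k * \prod_(0 <= i < k.+1) (1 + qq ^+ (m - i)) = (-1) ^+ k * GmsG qq m k.
  by move=> k; rewrite /cval divfK.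
have hG : GmsG qq m s = (-1) ^+ s * (cval qq m s * (1 + qq ^+ (m - s))) * \prod_(0 <= i < s) (1 + qq ^+ (m - i)).
  have := hc s; rewrite big_nat_recr //= => h.
  have -> : GmsG qq m s = (-1) ^+ s * ((-1) ^+ s * GmsG qq m s).
    by rewrite mulrA -exprD addnn -muln2 exprM sqrr_sign mul1r.
  rewrite -h. move: (\prod_(0 <= i < s) _) => P. ring.
rewrite hG crec // -mulrA mulrBl.
have -> : (\sum_(0 <= k < s) cval qq m k * (pp qq (m - k))`_(s - k)) * \prod_(0 <= i < s) (1 + qq ^+ (m - i))
  = \sum_(0 <= k < s) ((-1) ^+ k * GmsG qq m k) * \prod_(k.+1 <= i < s) (1 + qq ^+ (m - i))
        * (pp qq (m - k))`_(s - k).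
  rewrite mulr_suml; apply: eq_big_nat => k /andP[_ hk].
  have -> : \prod_(0 <= i < s) (1 + qq ^+ (m - i)) =
     \prod_(0 <= i < k.+1) (1 + qq ^+ (m - i)) * \prod_(k.+1 <= i < s) (1 + qq ^+ (m - i)).
    by rewrite -big_cat_nat.
  rewrite -hc.
  move: (\prod_(0 <= i < k.+1) _) (\prod_(k.+1 <= i < s) _) => A B. ring.
done.
Qed.

Lemma tofrac_polyint_neq0 (p : {poly int}) (x : int) :
  p.[x] != 0 -> (FracField.tofrac p : K) != 0.
Proof. move=> h; rewrite tofrac_eq0; apply: contra h => /eqP ->; by rewrite horner0. Qed.

Lemma qE : q = FracField.tofrac ('X^2 : {poly int}).
Proof. by rewrite /q /t tofracXn. Qed.

Lemma q_neq0 : q != 0.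
Proof. rewrite qE; apply: (@tofrac_polyint_neq0 _ 1); by rewrite hornerXn expr1n. Qed.

Lemma oneBq_neq0 : 1 - q != 0.
Proof. rewrite qE -tofrac1 -tofracB; apply: (@tofrac_polyint_neq0 _ 0).
by rewrite hornerD hornerN hornerXn hornerC expr0n. Qed.

Lemma onePqX_neq0 a : 1 + q ^+ a != 0.
Proof. rewrite qE -tofrac1 -tofracXn -tofracD; apply: (@tofrac_polyint_neq0 _ 1).
by rewrite !hornerE !expr1n. Qed.

Lemma natK (n : nat) : (n%:R : K) = FracField.tofrac (n%:R).
Proof. by rewrite rmorph_nat. Qed.

Lemma intK (c : int) : (c%:~R : K) = FracField.tofrac ((c%:~R : int)%:P).
Proof. by rewrite rmorph_int rmorph_int. Qed.

Lemma natK_eq (i j : nat) : ((i%:R : K) == j%:R) = (i == j).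
Proof.
rewrite !natK tofrac_eq -!polyC_natr (inj_eq polyC_inj).
by rewrite eqr_nat.
Qed.


Lemma natK_neq0 N : (0 < N)%N -> (N%:R : K) != 0.
Proof. by move=> h; have := natK_eq N 0; rewrite eqn0Ngt h /= => ->. Qed.

Lemma q_neq_nat (n : nat) : q != n%:R.
Proof.
rewrite qE natK tofrac_eq -polyC_natr; apply/eqP => h.
have := congr1 (fun p : {poly int} => size p) h; rewrite size_polyXn size_polyC.
by case: (_ != 0).
Qed.

Lemma natBq_neq0 (i : nat) : (i%:R : K) - q != 0.
Proof. rewrite subr_eq0 eq_sym; exact: q_neq_nat. Qed.

Lemma Pinj : injective (fun i : nat => ((i%:R - 1) * (i%:R - q) : K)).
Proof.
move=> i j /= h; apply/eqP; apply: contraT => hij.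
have e : (((i + j).-1)%:R : K) = i%:R + j%:R - 1.
  have hp : (1 <= i + j)%N by move: hij; lia.
  by rewrite -subn1 natrB // natrD.
have h2 : ((i%:R : K) - j%:R) * (((i + j).-1)%:R - q) = 0.
  rewrite e; transitivity (((i%:R : K) - 1) * (i%:R - q) - (j%:R - 1) * (j%:R - q)); first by ring.
  by rewrite h subrr.
move/eqP: h2; rewrite mulf_eq0 => /orP[|].
  by rewrite subr_eq0 natK_eq (negbTE hij).
by rewrite subr_eq0 eq_sym (negbTE (q_neq_nat _)).
Qed.

Lemma GmsE m s : Gms m s = GmsG q m s.
Proof. by []. Qed.

Lemma Tmn_rec m n : Tmn (2 * m) n.+1 = ((1 - q ^+ n.+1) / (1 - q)) ^+ (2 * m) - q ^+ m * Tmn (2 * m) n.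
Proof.
rewrite /Tmn big_nat_recr //= addrC subnn expr0 mul1r muln0 expr0 mulr1; congr (_ + _).
rewrite mulr_sumr -sumrN; apply: eq_big_nat => k /andP[h1 h2].
have hk : (k <= n)%N by rewrite -ltnS.
rewrite subSn // exprS mulnS exprD.
rewrite (_ : q ^+ m = t ^+ (2 * m)); last by rewrite /q -exprM.
move: (t ^+ (2 * m)) (t ^+ (2 * m * (n - k))%N) (((1 - q ^+ k) / (1 - q)) ^+ (2 * m)) ((-1) ^+ (n - k)%N : K)
  => a b c d.
ring.
Qed.

Lemma main_K m n : (0 < m)%N -> Tmn (2 * m) n = RsumG q m (q ^+ n).
Proof.
move=> hm; elim: n => [|n IH].
  rewrite /Tmn big_geq // /RsumG big1_seq // => k /andP[_]; rewrite mem_index_iota => /andP[_ hk].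
  rewrite expr0 subrr expr0n (_ : (m - k == 0)%N = false) ?mul0r ?mulr0 ?mul0r //.
  by apply/negbTE; rewrite subn_eq0 -ltnNge.
rewrite Tmn_rec IH.
have h := RsumG_rec (q ^+ n.+1) hm q_neq0 oneBq_neq0 onePqX_neq0 natK_neq0.
rewrite exprSr mulfK ?q_neq0 // in h.
by rewrite exprSr -h addrK.
Qed.

Definition isZ (x : K) := exists p : {poly int}, x = evalq p.

Lemma evalqD p r : evalq (p + r) = evalq p + evalq r.
Proof. by rewrite /evalq rmorphD hornerD. Qed.
Lemma evalqM p r : evalq (p * r) = evalq p * evalq r.
Proof. by rewrite /evalq rmorphM hornerM. Qed.
Lemma evalqN p : evalq (- p) = - evalq p.
Proof. by rewrite /evalq rmorphN hornerN. Qed.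
Lemma evalq_nat n : evalq n%:R = n%:R.
Proof. by rewrite /evalq rmorph_nat -polyC_natr hornerC. Qed.
Lemma evalqX : evalq 'X = q.
Proof. by rewrite /evalq map_polyX hornerX. Qed.

Lemma isZD x y : isZ x -> isZ y -> isZ (x + y).
Proof. by move=> [p ->] [r ->]; exists (p + r); rewrite evalqD. Qed.
Lemma isZM x y : isZ x -> isZ y -> isZ (x * y).
Proof. by move=> [p ->] [r ->]; exists (p * r); rewrite evalqM. Qed.
Lemma isZN x : isZ x -> isZ (- x).
Proof. by move=> [p ->]; exists (- p); rewrite evalqN. Qed.
Lemma isZB x y : isZ x -> isZ y -> isZ (x - y).
Proof. by move=> hx hy; apply: isZD => //; apply: isZN. Qed.
Lemma isZ_nat n : isZ n%:R.
Proof. by exists n%:R; rewrite evalq_nat. Qed.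
Lemma isZ0 : isZ 0.
Proof. by have := isZ_nat 0. Qed.
Lemma isZ1 : isZ 1.
Proof. by have := isZ_nat 1. Qed.
Lemma isZq : isZ q.
Proof. by exists 'X; rewrite evalqX. Qed.
Lemma isZX x n : isZ x -> isZ (x ^+ n).
Proof. by move=> hx; elim: n => [|n IH]; [rewrite expr0; apply: isZ1 | rewrite exprS; apply: isZM]. Qed.
Lemma isZ_sign n : isZ ((-1) ^+ n).
Proof. by apply: isZX; apply: isZN; apply: isZ1. Qed.

Lemma pp_isZ r i : isZ ((pp q r)`_i).
Proof.
suff : (forall i, isZ ((ppair q r).1`_i)) /\ (forall i, isZ ((ppair q r).2`_i)) by case=> h _; apply: h.
elim: r => [|r [IH1 IH2]] /=.
  split=> j; rewrite coefC; case: (j == 0%N); try apply: isZ0.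
    by apply: isZ_nat.
  by apply: isZD; [apply: isZ1 | apply: isZq].
split=> // j.
rewrite coefB coefCM mulrBl coefB coefCM coefXM.
apply: isZB; first by apply: isZM => //; apply: isZD; [apply: isZ1 | apply: isZq].
apply: isZB; first by apply: isZM => //; apply: isZq.
by case: (j == 0%N); [apply: isZ0 | apply: IH1].
Qed.

Lemma isZ_prod a b m : isZ (\prod_(a <= i < b) (1 + q ^+ (m - i))).
Proof.
apply: (big_ind isZ isZ1 isZM) => i _.
by apply: isZD; [apply: isZ1 | apply: isZX; apply: isZq].
Qed.

Lemma G_isZ m : (0 < m)%N -> forall s, (s < m)%N -> isZ (Gms m s).
Proof.
move=> hm.
have hH : Hpoly q m = 1
  by apply: H_one => //; [apply: q_neq0 | apply: oneBq_neq0 | apply: onePqX_neq0 | apply: natK_neq0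
                        | apply: natBq_neq0 | apply: Pinj].
move=> s; elim: s {-2}s (leqnn s) => [|s0 IH] s hs hsm.
  rewrite GmsE G_rec //; last by apply: onePqX_neq0.
  apply: isZM; first by apply: isZ_sign.
  apply: isZB; first by apply: isZM; [apply: isZ_nat | apply: isZ_prod].
  by rewrite big_geq //; apply: isZ0.
rewrite GmsE G_rec //; last by apply: onePqX_neq0.
apply: isZM; first by apply: isZ_sign.
apply: isZB; first by apply: isZM; [apply: isZ_nat | apply: isZ_prod].
rewrite big_seq; apply: (big_ind isZ isZ0 isZD) => k; rewrite mem_index_iota => /andP[_ hk].
apply: isZM; last by apply: pp_isZ.
apply: isZM; last by apply: isZ_prod.
apply: isZM; first by apply: isZ_sign.
rewrite -GmsE; apply: IH; lia.
Qed.

Theorem theorem1p3 (m n : nat) (hm : (1 <= m)%N) (hn : (1 <= n)%N) :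
  (forall s : nat, (s <= m - 1)%N -> exists p : {poly int}, Gms m s = evalq p) /\
  Tmn (2 * m) n =
    \sum_(0 <= k < m)
      (-1) ^+ k * Gms m k *
      ((1 - q ^+ n) ^+ (m - k) * (1 - q ^+ n.+1) ^+ (m - k) * q ^+ (k * n)) /
      ((1 - q) ^+ (2 * m - 2 * k) * \prod_(0 <= i < k.+1) (1 + q ^+ (m - i))).
Proof.
split.
  move=> s hs; apply: G_isZ => //; lia.
rewrite main_K // /RsumG; apply: eq_big_nat => k _.
rewrite exprS (_ : q ^+ (k * n) = (q ^+ n) ^+ k) //; by rewrite mulnC exprM.
Qed.
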